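(* Let $1\le p<\infty$, $N\ge2$, and let $T_i=T_{f_i,\omega^{(i)}}$ ($1\le i\le N$) be unilateral pseudo-shifts on $\ell^p(\mathbb{N})$. If $f_i=f_\ell$ for some $i\ne\ell$, then $T_1,\dots,T_N$ fail to satisfy the Disjoint Hypercyclicity Criterion. In particular, unilateral weighted backward shifts $T_1,\dots,T_N$ on $\ell^p(\mathbb{N})$ never satisfy the Disjoint Hypercyclicity Criterion.
   Context: $\{e_m\}$ is the canonical basis of $\ell^p(\mathbb{N})$ over $\mathbb{K}\in\{\mathbb{R},\mathbb{C}\}$. For a strictly increasing $f:\mathbb{N}\to\mathbb{N}$ with $f(1)>1$ and a bounded, nonzero sequence of scalars $\omega=(w_{f(m)})_{m}$, the pseudo-shift is $T_{f,\omega}(\sum_m\alpha_me_m)=\sum_mw_{f(m)}\alpha_{f(m)}e_m$. A unilateral weighted backward shift with bounded weight sequence $(w_m)$ is $Te_m=w_me_{m-1}$ for $m\ge2$, $Te_1=0$ (the pseudo-shift with $f(m)=m+1$). Operators $T_1,\dots,T_N$ on $X$ satisfy the Disjoint Hypercyclicity Criterion if there exist a strictly increasing sequence $(n_k)$, dense subsets $X_0,\dots,X_N$ of $X$ and maps $S_{j,k}:X_j\to X$ with: $T_i^{n_k}\to0$ pointwise on $X_0$; $S_{j,k}\to0$ pointwise on $X_j$; $T_i^{n_k}S_{j,k}-\delta_{i,j}\mathrm{Id}\to0$ pointwise on $X_j$, for all $1\le i,j\le N$. *)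

(* Defs.v *)
(* Scalars: a Coquelicot AbsRing K (the theorem
   restricts K to R_AbsRing or C_AbsRing).  Sequences are indexed from 0:
   coordinate m (Rocq) = coordinate m+1 (paper). *)
From Stdlib Require Import Reals Lra.
From Coquelicot Require Import Coquelicot.
Open Scope R_scope.

(* a^p for a >= 0, with 0^p = 0 (Stdlib's Rpower 0 p = 1, so guard it) *)
Definition pw (a p : R) : R := if Rle_dec a 0 then 0 else Rpower a p.

Definition lp {K : AbsRing} (p : R) (x : nat -> K) : Prop :=
  ex_series (fun n => pw (abs (x n)) p).

Definition lp_norm {K : AbsRing} (p : R) (x : nat -> K) : R :=
  pw (Series (fun n => pw (abs (x n)) p)) (/ p).

Definition seq_minus {K : AbsRing} (x y : nat -> K) : nat -> K :=
  fun n => minus (x n) (y n).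

Definition seq_zero {K : AbsRing} : nat -> K := fun _ => zero.

Definition lp_dense {K : AbsRing} (p : R) (D : (nat -> K) -> Prop) : Prop :=
  (forall x, D x -> lp p x) /\
  (forall x, lp p x -> forall eps, 0 < eps ->
     exists d, D d /\ lp_norm p (seq_minus x d) < eps).

Definition lp_to0 {K : AbsRing} (p : R) (y : nat -> nat -> K) : Prop :=
  is_lim_seq (fun k => lp_norm p (y k)) 0.

(* pseudo-shift T_{f,w}: (T x)_m = w_{f(m)} x_{f(m)}; here w m stands for the
   paper's w_{f(m)} *)
Definition pseudo_shift {K : AbsRing} (f : nat -> nat) (w : nat -> K)
  (x : nat -> K) : nat -> K := fun m => mult (w m) (x (f m)).

Definition pseudo_shift_data {K : AbsRing} (f : nat -> nat) (w : nat -> K) : Prop :=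
  (forall m n, (m < n)%nat -> (f m < f n)%nat) /\ (0 < f 0)%nat /\
  (exists M, forall m, abs (w m) <= M) /\ (forall m, w m <> zero).

(* unilateral weighted backward shift: T e_m = w_m e_{m-1} (m >= 1), T e_0 = 0,
   i.e. (T x)_m = w_{m+1} x_{m+1} *)
Definition backward_shift {K : AbsRing} (w : nat -> K) (x : nat -> K) : nat -> K :=
  fun m => mult (w (S m)) (x (S m)).

Definition backward_shift_weights {K : AbsRing} (w : nat -> K) : Prop :=
  (exists M, forall m, abs (w m) <= M) /\ (forall m, (1 <= m)%nat -> w m <> zero).

Definition DHC {K : AbsRing} (p : R) (N : nat) (T : nat -> (nat -> K) -> (nat -> K)) : Prop :=
  exists (nk : nat -> nat),
    (forall k, (nk k < nk (S k))%nat) /\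
  exists (X0 : (nat -> K) -> Prop) (X : nat -> (nat -> K) -> Prop)
         (Sm : nat -> nat -> (nat -> K) -> (nat -> K)),
    lp_dense p X0 /\
    (forall j, (j < N)%nat -> lp_dense p (X j)) /\
    (forall j k x, (j < N)%nat -> X j x -> lp p (Sm j k x)) /\
    (forall i x, (i < N)%nat -> X0 x ->
       lp_to0 p (fun k => Nat.iter (nk k) (T i) x)) /\
    (forall j x, (j < N)%nat -> X j x ->
       lp_to0 p (fun k => Sm j k x)) /\
    (forall i j x, (i < N)%nat -> (j < N)%nat -> X j x ->
       lp_to0 p (fun k => seq_minus (Nat.iter (nk k) (T i) (Sm j k x))
                                    (if Nat.eqb i j then x else seq_zero))).

(* Main.v *)
Require Import Defs.
From Stdlib Require Import Reals Lra Lia.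
From Coquelicot Require Import Coquelicot.
Open Scope R_scope.

Lemma pw_nonneg a p : 0 <= pw a p.
Proof. unfold pw; destruct (Rle_dec a 0); [lra| unfold Rpower; left; apply exp_pos]. Qed.

Lemma pw_pos a p : 0 < a -> pw a p = Rpower a p.
Proof. intro; unfold pw; destruct (Rle_dec a 0); [lra|auto]. Qed.

Lemma pw_le a b p : 0 <= p -> a <= b -> pw a p <= pw b p.
Proof.
  intros Hp Hab. unfold pw at 1. destruct (Rle_dec a 0). apply pw_nonneg.
  rewrite pw_pos by lra. apply Rle_Rpower_l; lra.
Qed.

Lemma pw_inv a p : 0 <= a -> 0 < p -> pw (pw a p) (/ p) = a.
Proof.
  intros Ha Hp. destruct (Req_dec a 0) as [->|].
  - unfold pw; destruct (Rle_dec 0 0); [|lra]. destruct (Rle_dec 0 0); lra.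
  - rewrite (pw_pos a) by lra. rewrite pw_pos by (unfold Rpower; apply exp_pos).
    rewrite Rpower_mult, Rinv_r, Rpower_1; lra.
Qed.

Lemma pw_mult a b p : 0 <= a -> 0 <= b -> pw (a * b) p = pw a p * pw b p.
Proof.
  intros Ha Hb. destruct (Req_dec a 0) as [->|]. 
  { rewrite Rmult_0_l. unfold pw at 1 2. destruct (Rle_dec 0 0); lra. }
  destruct (Req_dec b 0) as [->|]. 
  { rewrite Rmult_0_r. unfold pw at 1 3. destruct (Rle_dec 0 0); lra. }
  rewrite !pw_pos by nra. rewrite Rpower_mult_distr; auto; lra.
Qed.

Lemma pw_sum_bound a b c p : 0 <= p -> 0 <= a -> 0 <= b -> c <= a + b ->
  pw c p <= pw 2 p * (pw a p + pw b p).
Proof.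
  intros Hp Ha Hb Hc.
  apply Rle_trans with (pw (2 * Rmax a b) p).
  { apply pw_le; auto. unfold Rmax; destruct (Rle_dec a b); lra. }
  rewrite pw_mult by (try lra; unfold Rmax; destruct (Rle_dec a b); lra).
  apply Rmult_le_compat_l. apply pw_nonneg.
  pose proof (pw_nonneg a p); pose proof (pw_nonneg b p).
  unfold Rmax; destruct (Rle_dec a b); lra.
Qed.

Lemma ex_series_zero : ex_series (fun _ : nat => 0).
Proof.
  apply (@ex_series_le R_AbsRing R_CompleteNormedModule _ (fun n => (1/2)^n)).
  - intro n. change (norm (0:R)) with (Rabs 0). rewrite Rabs_R0. apply pow_le. lra.
  - apply ex_series_geom. rewrite Rabs_pos_eq; lra.
Qed.

Lemma Series_nonneg a : (forall n, 0 <= a n) -> ex_series a -> 0 <= Series a.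
Proof.
  intros Ha He. assert (Series (fun _ => 0 * a 0%nat) = 0).
  { rewrite Series_scal_l. lra. }
  rewrite <- H. apply Series_le; auto. intro; rewrite Rmult_0_l; split; [lra|auto].
Qed.

Lemma sum_le_Series a n : (forall n, 0 <= a n) -> ex_series a -> sum_f_R0 a n <= Series a.
Proof.
  intros Ha He. rewrite (Series_incr_n a (S n)) by (auto; lia). simpl.
  assert (0 <= Series (fun k => a (S (n + k)))).
  { apply Series_nonneg. auto. apply (ex_series_incr_n a (S n)) in He. exact He. }
  lra.
Qed.

Lemma sum_mono a k K : (forall n, 0 <= a n) -> (k <= K)%nat -> sum_f_R0 a k <= sum_f_R0 a K.
Proof.
  intros Ha H. induction H. lra. simpl. specialize (Ha (S m)). lra.
Qed.

Lemma sum_add a k K : (forall n, 0 <= a n) -> (k < K)%nat -> sum_f_R0 a k + a K <= sum_f_R0 a K.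
Proof.
  intros Ha H. destruct K. lia. simpl. pose proof (sum_mono a k K Ha ltac:(lia)). lra.
Qed.

Lemma term_le_sum a K : (forall n, 0 <= a n) -> a K <= sum_f_R0 a K.
Proof.
  intros Ha. destruct K. simpl; lra. simpl. pose proof (sum_mono a 0 K Ha ltac:(lia)).
  simpl in H. specialize (Ha 0%nat). lra.
Qed.

Lemma ex_series_sub a f : (forall n, 0 <= a n) -> ex_series a ->
  (forall m n, (m < n)%nat -> (f m < f n)%nat) -> ex_series (fun m => a (f m)).
Proof.
  intros Ha He Hf. apply ex_series_Reals_1.
  apply growing_cv.
  - intro n. simpl. specialize (Ha (f (S n))). lra.
  - exists (Series a). intros x [i ->].
    apply Rle_trans with (sum_f_R0 a (f i)); [|apply sum_le_Series; auto].
    induction i. simpl. apply term_le_sum; auto.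
    simpl. pose proof (sum_add a (f i) (f (S i)) Ha (Hf i (S i) ltac:(lia))). lra.
Qed.
Lemma abs_minus_le {K : AbsRing} (x y : K) : abs (minus x y) <= abs x + abs y.
Proof. unfold minus. rewrite <- (abs_opp y). apply abs_triangle. Qed.

Lemma ex_series_R_le (a b : nat -> R) : (forall n, 0 <= a n <= b n) -> ex_series b -> ex_series a.
Proof.
  intros H Hb. apply (@ex_series_le R_AbsRing R_CompleteNormedModule a b); auto.
  intro n. change (norm (a n)) with (Rabs (a n)). rewrite Rabs_pos_eq; apply H.
Qed.

Lemma ex_series_R_scal (c : R) (a : nat -> R) : ex_series a -> ex_series (fun n => c * a n).
Proof. intro H. apply (ex_series_scal_l c a H). Qed.

Lemma ex_series_R_plus (a b : nat -> R) : ex_series a -> ex_series b -> ex_series (fun n => a n + b n).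
Proof. intros. apply (ex_series_plus a b); auto. Qed.

Lemma lp_minus {K : AbsRing} p (x y : nat -> K) : 0 <= p -> lp p x -> lp p y -> lp p (seq_minus x y).
Proof.
  intros Hp Hx Hy. unfold lp, seq_minus.
  apply ex_series_R_le with (fun n => pw 2 p * (pw (abs (x n)) p + pw (abs (y n)) p)).
  - intro n. split. apply pw_nonneg. apply pw_sum_bound; auto using abs_ge_0, abs_minus_le.
  - apply ex_series_R_scal, ex_series_R_plus; auto.
Qed.

Lemma lp_shift {K : AbsRing} p f (w x : nat -> K) : 0 <= p -> pseudo_shift_data f w -> lp p x ->
  lp p (pseudo_shift f w x).
Proof.
  intros Hp [Hf [_ [[M HM] _]]] Hx. unfold lp, pseudo_shift.
  apply ex_series_R_le with (fun n => pw (Rabs M) p * pw (abs (x (f n))) p).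
  - intro n. split. apply pw_nonneg. rewrite <- pw_mult by (auto using Rabs_pos, abs_ge_0).
    apply pw_le; auto. eapply Rle_trans. apply abs_mult. apply Rmult_le_compat_r. apply abs_ge_0.
    eapply Rle_trans. apply HM. apply Rle_abs.
  - apply ex_series_R_scal. apply (ex_series_sub (fun n => pw (abs (x n)) p)); auto.
    intro; apply pw_nonneg.
Qed.

Lemma lp_iter {K : AbsRing} p f (w x : nat -> K) n : 0 <= p -> pseudo_shift_data f w -> lp p x ->
  lp p (Nat.iter n (pseudo_shift f w) x).
Proof. intros Hp Hd Hx. induction n; simpl; auto. apply lp_shift; auto. Qed.

Lemma coord_bound {K : AbsRing} p (y : nat -> K) : 0 < p -> lp p y -> abs (y 0%nat) <= lp_norm p y.
Proof.
  intros Hp Hy. unfold lp_norm. rewrite <- (pw_inv (abs (y 0%nat)) p) by (auto using abs_ge_0).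
  apply pw_le. left; apply Rinv_0_lt_compat; auto.
  unfold lp in Hy. rewrite (Series_incr_1 _ Hy).
  assert (0 <= Series (fun k => pw (abs (y (S k))) p)).
  { apply Series_nonneg. intro; apply pw_nonneg. apply (ex_series_incr_1 (fun n => pw (abs (y n)) p)) in Hy. exact Hy. }
  lra.
Qed.

Fixpoint Aw {K : AbsRing} (f : nat -> nat) (w : nat -> K) (n m : nat) : R :=
  match n with O => 1 | S n => abs (w m) * Aw f w n (f m) end.

Lemma iter_shift_comm (f : nat -> nat) n m : Nat.iter n f (f m) = f (Nat.iter n f m).
Proof. induction n; simpl; congruence. Qed.

Lemma iter_formula {K : AbsRing} (Hm : forall a b : K, abs (mult a b) = abs a * abs b)
  f (w y : nat -> K) n m :
  abs (Nat.iter n (pseudo_shift f w) y m) = Aw f w n m * abs (y (Nat.iter n f m)).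
Proof.
  revert m. induction n; intro m; simpl. lra.
  unfold pseudo_shift at 1. rewrite Hm, IHn, iter_shift_comm. ring.
Qed.

Lemma Aw_pos {K : AbsRing} (Hd : forall a : K, a <> zero -> 0 < abs a) f (w : nat -> K) n m :
  (forall m, w m <> zero) -> 0 < Aw f w n m.
Proof.
  intro Hw. revert m. induction n; intro m; simpl. lra.
  apply Rmult_lt_0_compat; auto.
Qed.

Lemma pw_zero p : pw 0 p = 0.
Proof. unfold pw; destruct (Rle_dec 0 0); lra. Qed.

Lemma abs_ge_minus {K : AbsRing} (a b : K) : abs a <= abs (minus a b) + abs b.
Proof.
  replace a with (plus (minus a b) b) at 1.
  apply abs_triangle.
  unfold minus. rewrite <- plus_assoc, plus_opp_l, plus_zero_r. reflexivity.
Qed.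

Lemma dense_nonzero {K : AbsRing} p (D : (nat -> K) -> Prop) : 0 < p -> lp_dense p D ->
  exists d, D d /\ d 0%nat <> zero.
Proof.
  intros Hp [HD Hdense].
  set (e0 := fun n : nat => match n with O => (one : K) | S _ => zero end).
  assert (He : lp p e0).
  { unfold lp. apply (ex_series_incr_1 (fun n => pw (abs (e0 n)) p)).
    apply (ex_series_ext (fun _ => 0)). intro n; simpl. rewrite abs_zero, pw_zero; auto.
    apply ex_series_zero. }
  destruct (Hdense e0 He 1 Rlt_0_1) as [d [Hd Hn]].
  exists d; split; auto. intro H0.
  pose proof (coord_bound p (seq_minus e0 d) Hp (lp_minus p e0 d ltac:(lra) He (HD d Hd))).
  unfold seq_minus in H. pose proof (abs_ge_minus (e0 0%nat) (d 0%nat)).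
  assert (abs (d 0%nat) = 0) by (rewrite H0; apply abs_zero).
  assert (abs (e0 0%nat) = 1) by apply abs_one. fold (seq_minus e0 d) in H. lra.
Qed.

Lemma lim_small (u : nat -> R) (eps : R) : 0 < eps -> is_lim_seq u 0 ->
  exists N, forall n, (N <= n)%nat -> u n < eps.
Proof.
  intros He H. apply is_lim_seq_spec in H. destruct (H (mkposreal eps He)) as [N HN].
  exists N. intros n Hn. specialize (HN n Hn). simpl in HN. rewrite Rminus_0_r in HN.
  pose proof (Rle_abs (u n)). lra.
Qed.

Lemma coord_small {K : AbsRing} p (g : nat -> nat -> K) : 0 < p -> lp_to0 p g ->
  (forall k, lp p (g k)) -> forall eps, 0 < eps -> exists N, forall k, (N <= k)%nat -> abs (g k 0%nat) < eps.
Proof.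
  intros Hp H Hl eps He. destruct (lim_small _ eps He H) as [N HN]. exists N. intros k Hk.
  pose proof (coord_bound p (g k) Hp (Hl k)). specialize (HN k Hk). lra.
Qed.

Lemma lp_zero {K : AbsRing} p : lp p (@seq_zero K).
Proof.
  unfold lp, seq_zero. apply (ex_series_ext (fun _ => 0)). intro n. rewrite abs_zero, pw_zero; auto.
  apply ex_series_zero.
Qed.

Lemma main_generic {K : AbsRing} (Hm : forall a b : K, abs (mult a b) = abs a * abs b)
  (Hd : forall a : K, a <> zero -> 0 < abs a) p (hp : 1 <= p) N
  (f : nat -> nat -> nat) (w : nat -> nat -> K) :
  (forall i, (i < N)%nat -> pseudo_shift_data (f i) (w i)) ->
  (exists i l, (i < N)%nat /\ (l < N)%nat /\ i <> l /\ f i = f l) ->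
  ~ DHC p N (fun i => pseudo_shift (f i) (w i)).
Proof.
  intros Hdata [i [l [Hi [Hl [Hil Hf]]]]] [nk [_ [X0 [X [Sm [_ [HXd [HSlp [_ [_ H6]]]]]]]]]].
  assert (Hp : 0 < p) by lra. assert (Hp' : 0 <= p) by lra.
  destruct (dense_nonzero p (X i) Hp (HXd i Hi)) as [x [Hx Hx0]].
  destruct (dense_nonzero p (X l) Hp (HXd l Hl)) as [z [Hz Hz0]].
  assert (Hxl : lp p x) by (apply (proj1 (HXd i Hi)); auto).
  assert (Hzl : lp p z) by (apply (proj1 (HXd l Hl)); auto).
  pose proof (Hd _ Hx0) as Ha. pose proof (Hd _ Hz0) as Hb.
  set (alpha := abs (x 0%nat)) in *. set (beta := abs (z 0%nat)) in *.
  set (eps := Rmin (alpha/2) (beta/2)).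
  assert (He : 0 < eps) by (unfold eps, Rmin; destruct (Rle_dec _ _); lra).
  assert (He1 : eps <= alpha / 2) by apply Rmin_l.
  assert (He2 : eps <= beta / 2) by apply Rmin_r.
  assert (Hne : Nat.eqb l i = false) by (apply Nat.eqb_neq; auto).
  assert (Hne' : Nat.eqb i l = false) by (apply Nat.eqb_neq; auto).
  pose proof (H6 i i x Hi Hi Hx) as G1. rewrite Nat.eqb_refl in G1.
  pose proof (H6 l i x Hl Hi Hx) as G2. rewrite Hne in G2.
  pose proof (H6 l l z Hl Hl Hz) as G3. rewrite Nat.eqb_refl in G3.
  pose proof (H6 i l z Hi Hl Hz) as G4. rewrite Hne' in G4.
  destruct (coord_small p _ Hp G1) with eps as [N1 HN1]; auto.
  { intro k. apply lp_minus; auto. apply lp_iter; auto. }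
  destruct (coord_small p _ Hp G2) with eps as [N2 HN2]; auto.
  { intro k. apply lp_minus; auto using lp_zero. apply lp_iter; auto. }
  destruct (coord_small p _ Hp G3) with eps as [N3 HN3]; auto.
  { intro k. apply lp_minus; auto. apply lp_iter; auto. }
  destruct (coord_small p _ Hp G4) with eps as [N4 HN4]; auto.
  { intro k. apply lp_minus; auto using lp_zero. apply lp_iter; auto. }
  set (k := (N1 + N2 + N3 + N4)%nat).
  specialize (HN1 k ltac:(unfold k; lia)). specialize (HN2 k ltac:(unfold k; lia)).
  specialize (HN3 k ltac:(unfold k; lia)). specialize (HN4 k ltac:(unfold k; lia)).
  cbv beta in HN1, HN2, HN3, HN4. unfold seq_minus, seq_zero in HN1, HN2, HN3, HN4.
  set (y := Sm i k x) in *. set (y' := Sm l k z) in *.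
  pose proof (abs_ge_minus (x 0%nat) (Nat.iter (nk k) (pseudo_shift (f i) (w i)) y 0%nat)) as E1.
  rewrite abs_minus in E1.
  pose proof (abs_ge_minus (Nat.iter (nk k) (pseudo_shift (f l) (w l)) y 0%nat) zero) as E2.
  rewrite abs_zero in E2.
  pose proof (abs_ge_minus (z 0%nat) (Nat.iter (nk k) (pseudo_shift (f l) (w l)) y' 0%nat)) as E3.
  rewrite abs_minus in E3.
  pose proof (abs_ge_minus (Nat.iter (nk k) (pseudo_shift (f i) (w i)) y' 0%nat) zero) as E4.
  rewrite abs_zero in E4.
  rewrite !(iter_formula Hm) in E1, E2, E3, E4. rewrite Hf in E1, E4.
  destruct (Hdata i Hi) as [_ [_ [_ Hwi]]]. destruct (Hdata l Hl) as [_ [_ [_ Hwl]]].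
  pose proof (Aw_pos Hd (f i) (w i) (nk k) 0 Hwi) as Ai.
  pose proof (Aw_pos Hd (f l) (w l) (nk k) 0 Hwl) as Al.
  rewrite Hf in Ai.
  set (A1 := Aw (f l) (w i) (nk k) 0) in *. set (A2 := Aw (f l) (w l) (nk k) 0) in *.
  set (c := abs (y (Nat.iter (nk k) (f l) 0%nat))) in *.
  set (c' := abs (y' (Nat.iter (nk k) (f l) 0%nat))) in *.
  assert (0 <= c) by apply abs_ge_0. assert (0 <= c') by apply abs_ge_0.
  rewrite Hf in HN1, HN4. change (abs (x 0%nat)) with alpha in E1. change (abs (z 0%nat)) with beta in E3.
  assert (A2 * c < A1 * c) by lra.
  assert (A1 * c' < A2 * c') by lra.
  assert (A2 < A1) by (destruct (Req_dec c 0); [subst c; nra | nra]).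
  assert (A1 < A2) by (destruct (Req_dec c' 0); nra).
  lra.
Qed.

Lemma main_all {K : AbsRing} (Hm : forall a b : K, abs (mult a b) = abs a * abs b)
  (Hd : forall a : K, a <> zero -> 0 < abs a) p (hp : 1 <= p) N (hN : (2 <= N)%nat) :
  (forall (f : nat -> nat -> nat) (w : nat -> nat -> K),
     (forall i, (i < N)%nat -> pseudo_shift_data (f i) (w i)) ->
     (exists i l, (i < N)%nat /\ (l < N)%nat /\ i <> l /\ f i = f l) ->
     ~ DHC p N (fun i => pseudo_shift (f i) (w i)))
  /\
  (forall (w : nat -> nat -> K),
     (forall i, (i < N)%nat -> backward_shift_weights (w i)) ->
     ~ DHC p N (fun i => backward_shift (w i))).
Proof.
  split.
  - intros f w. apply main_generic; auto.
  - intros w Hw. 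
    apply (main_generic Hm Hd p hp N (fun _ => S) (fun i m => w i (S m))).
    + intros i Hi. destruct (Hw i Hi) as [[M HM] Hnz]. split; [|split; [|split]].
      * intros; lia.
      * lia.
      * exists M; auto.
      * intro m; apply Hnz; lia.
    + exists 0%nat, 1%nat. repeat split; lia.
Qed.

Theorem corollary2p9 (K : AbsRing) (HK : K = R_AbsRing \/ K = C_AbsRing)
  (p : R) (hp : 1 <= p) (N : nat) (hN : (2 <= N)%nat) :
  (forall (f : nat -> nat -> nat) (w : nat -> nat -> K),
     (forall i, (i < N)%nat -> pseudo_shift_data (f i) (w i)) ->
     (exists i l, (i < N)%nat /\ (l < N)%nat /\ i <> l /\ f i = f l) ->
     ~ DHC p N (fun i => pseudo_shift (f i) (w i)))
  /\
  (forall (w : nat -> nat -> K),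
     (forall i, (i < N)%nat -> backward_shift_weights (w i)) ->
     ~ DHC p N (fun i => backward_shift (w i))).
Proof.
  destruct HK; subst K; apply main_all; auto.
  - intros a b. apply Rabs_mult.
  - intros a Ha. apply Rabs_pos_lt. exact Ha.
  - intros a b. apply Cmod_mult.
  - intros a Ha. apply Cmod_gt_0. exact Ha.
Qed.
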